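(* Let $f:U\to\mathbb{R}^3$ be a Guichard net with Lamé coefficients $H_1,H_2,H_3$ and let $\bar f$ be a Combescure transform of $f$ with Lamé coefficients $\bar H_1,\bar H_2,\bar H_3$ which is an $\alpha^2|\bar f|^2$-system, $\alpha\in\mathbb{R}\setminus\{0\}$. Then the 1-parameter family of Ribaucour transformations of $f$ induced by $\bar f$ contains exactly one Guichard net $\mathcal{R}(f)$, namely the one given by $$\mathcal{R}(f)=f-\frac{2\varphi}{|\bar f|^2}\bar f,\qquad \mathcal{R}(H_i)=H_i-\frac{2\varphi}{|\bar f|^2}\bar H_i,$$ where $\varphi:=\frac1{\alpha^2}\{H_1\bar H_1+H_2\bar H_2-H_3\bar H_3\}$.
   Context: $U\subset\mathbb{R}^3$ open connected, coordinates $(x_1,x_2,x_3)$, $\partial_i=\partial_{x_i}$. A triply orthogonal system is $f:U\to\mathbb{R}^3$ with $\det(\partial_1f,\partial_2f,\partial_3f)\ne0$ and $(\partial_if,\partial_jf)=0$ for $i\ne j$. For $(i,j,k)$ cyclic, $N_i=\partial_jf\times\partial_kf/|\partial_jf\times\partial_kf|$, Lamé coefficients $H_i$ by $\partial_if=H_iN_i$, rotational coefficients $\beta_{ij}=\frac1{H_i}\partial_iH_j$. A Combescure transform of $f$ is a triply orthogonal system $\bar f$ with the same rotational coefficients, $\partial_i\bar f=\bar H_iN_i$ (Lamé coefficients $\bar H_i$ taken with respect to the same $N_i$). A $\chi$-system is one with $H_1^2+H_2^2-H_3^2=\chi$; a Guichard net is a $0$-system; an $\alpha^2|\bar f|^2$-system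 is one with $\bar H_1^2+\bar H_2^2-\bar H_3^2=\alpha^2|\bar f|^2$. Induced Ribaucour transforms: given a Combescure transform $\bar f$ of $f$, put $\gamma_i:=\bar f\cdot N_i$ (so $|\bar f|^2=\gamma_1^2+\gamma_2^2+\gamma_3^2$). For every solution $\varphi$ of $\partial_i\varphi=H_i\gamma_i$ ($i=1,2,3$; such solutions exist and are unique up to an additive constant), the map $f'=f-\frac{2\varphi}{|\bar f|^2}\bar f$, with Lamé coefficients $H'_i=H_i-\frac{2\varphi}{|\bar f|^2}\bar H_i$, is a Ribaucour transform of $f$ (corresponding coordinate surfaces envelop a common sphere congruence with corresponding curvature lines); these form the 1-parameter family of Ribaucour transforms induced by $\bar f$. Such $f'$ is a Guichard net if $H_1'^2+H_2'^2-H_3'^2=0$. *)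

(* Defs.v *)
From HB Require Import structures.
From mathcomp Require Import all_boot all_order all_algebra.
From mathcomp Require Import all_classical all_reals all_analysis.
Set Implicit Arguments. Unset Strict Implicit. Unset Printing Implicit Defensive.
Import Order.TTheory GRing.Theory Num.Theory.
Import numFieldNormedType.Exports.
Local Open Scope classical_set_scope.
Local Open Scope ring_scope.

Section Defs.
Variable R : realType.
Notation V := 'rV[R]_3.

Definition evec (i : 'I_3) : V := delta_mx 0 i.

Definition dot (u v : V) : R := \sum_(k < 3) u 0 k * v 0 k.
Definition enorm (u : V) : R := Num.sqrt (dot u u).
Definition cross (u v : V) : V :=
  \row_k (u 0 (ordS k) * v 0 (ordS (ordS k)) - u 0 (ordS (ordS k)) * v 0 (ordS k)).

Definition pd {W : normedModType R} (i : 'I_3) (g : V -> W) : V -> W :=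
  fun x => 'D_(evec i) g x.

Definition pds {W : normedModType R} (s : seq 'I_3) (g : V -> W) : V -> W :=
  foldr (fun i h => pd i h) g s.

Definition smooth_on {W : normedModType R} (U : set V) (g : V -> W) : Prop :=
  forall (s : seq 'I_3) (x : V), U x -> differentiable (pds s g) x.

Definition triply_orthogonal (U : set V) (f : V -> V) : Prop :=
  smooth_on U f /\
  (forall x, U x -> \det (\matrix_(i < 3, j < 3) pd i f x 0 j) != 0) /\
  (forall x (i j : 'I_3), U x -> i != j -> dot (pd i f x) (pd j f x) = 0).

Definition Nvec (f : V -> V) (i : 'I_3) (x : V) : V :=
  let c := cross (pd (ordS i) f x) (pd (ordS (ordS i)) f x) in (enorm c)^-1 *: c.

(* Lame coefficients of g with respect to the normals N_i of f:
   d_i g = H_i N_i  (for g = f these are the Lame coefficients of f) *)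
Definition Lame (f g : V -> V) (i : 'I_3) (x : V) : R := dot (pd i g x) (Nvec f i x).

Definition rotcoef (H : 'I_3 -> V -> R) (i j : 'I_3) (x : V) : R :=
  (H i x)^-1 * pd i (H j) x.

Definition combescure (U : set V) (f fbar : V -> V) : Prop :=
  triply_orthogonal U fbar /\
  (forall x i, U x -> pd i fbar x = Lame f fbar i x *: Nvec f i x) /\
  (forall x (i j : 'I_3), U x -> i != j ->
     rotcoef (Lame f fbar) i j x = rotcoef (Lame f f) i j x).

Definition i0 : 'I_3 := @Ordinal 3 0 isT.
Definition i1 : 'I_3 := @Ordinal 3 1 isT.
Definition i2 : 'I_3 := @Ordinal 3 2 isT.

Definition lorentz_sq (H : 'I_3 -> V -> R) (x : V) : R :=
  H i0 x ^+ 2 + H i1 x ^+ 2 - H i2 x ^+ 2.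

Definition guichard (U : set V) (f : V -> V) : Prop :=
  triply_orthogonal U f /\ forall x, U x -> lorentz_sq (Lame f f) x = 0.

Definition alpha_system (U : set V) (f fbar : V -> V) (alpha : R) : Prop :=
  forall x, U x -> lorentz_sq (Lame f fbar) x = alpha ^+ 2 * dot (fbar x) (fbar x).

Definition gam (f fbar : V -> V) (i : 'I_3) (x : V) : R := dot (fbar x) (Nvec f i x).

Definition induced_potential (U : set V) (f fbar : V -> V) (phi : V -> R) : Prop :=
  forall x (i : 'I_3), U x -> is_derive x (evec i) phi (Lame f f i x * gam f fbar i x).

Definition ribaucour (f fbar : V -> V) (phi : V -> R) : V -> V :=
  fun x => f x - (2 * phi x / dot (fbar x) (fbar x)) *: fbar x.
Definition ribaucour_Lame (f fbar : V -> V) (phi : V -> R) (i : 'I_3) (x : V) : R :=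
  Lame f f i x - 2 * phi x / dot (fbar x) (fbar x) * Lame f fbar i x.

Definition ribaucour_guichard (U : set V) (f fbar : V -> V) (phi : V -> R) : Prop :=
  forall x, U x -> lorentz_sq (ribaucour_Lame f fbar phi) x = 0.

Definition phi_R (f fbar : V -> V) (alpha : R) (x : V) : R :=
  (alpha ^+ 2)^-1 * (Lame f f i0 x * Lame f fbar i0 x + Lame f f i1 x * Lame f fbar i1 x
                      - Lame f f i2 x * Lame f fbar i2 x).

End Defs.

(* Main.v *)
Require Import Defs.
From HB Require Import structures.
From mathcomp Require Import all_boot all_order all_algebra.
From mathcomp Require Import all_classical all_reals all_analysis.
From mathcomp Require Import ring lra.
Import Order.TTheory GRing.Theory Num.Theory.
Import numFieldNormedType.Exports.
Local Open Scope classical_set_scope.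
Local Open Scope ring_scope.

Lemma det3 (R : comRingType) (M : 'M[R]_3) : \det M =
  M 0 0 * (M 1 1 * M 2 2 - M 1 2 * M 2 1)
  - M 0 1 * (M 1 0 * M 2 2 - M 1 2 * M 2 0)
  + M 0 2 * (M 1 0 * M 2 1 - M 1 1 * M 2 0).
Proof.
rewrite (expand_det_row M 0) !big_ord_recl big_ord0 /cofactor.
rewrite !(expand_det_row _ 0) !big_ord_recl !big_ord0 /cofactor !det_mx11 !mxE /=.
pose F := fun (a b : nat) => M (inord a) (inord b).
have HM : forall i j, M i j = F i j by move=> i j; rewrite /F !inord_val.
rewrite !HM /=.
rewrite !expr0 !expr1; ring.
Qed.

Section S.
Variable R : realType.
Implicit Types (U : set 'rV[R]_3).
Notation V := 'rV[R]_3.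

Lemma triple_det (a : 'I_3 -> V) (j : 'I_3) :
  dot (a j) (cross (a (ordS j)) (a (ordS (ordS j)))) =
  \det (\matrix_(i < 3, k < 3) a i 0 k).
Proof.
rewrite det3 /dot /cross !big_ord_recl big_ord0 !mxE /=.
pose F := fun (n m : nat) => a (inord n) 0 (inord m).
have HM : forall i k, a i 0 k = F i k by move=> i k; rewrite /F !inord_val.
rewrite !HM /=.
case: j => [[|[|[|//]]] ?] /=; rewrite ?HM /=; ring.
Qed.

Lemma dot3 (u w : V) : dot u w = u 0 0 * w 0 0 + u 0 1 * w 0 1 + u 0 2 * w 0 2.
Proof.
rewrite /dot !big_ord_recl big_ord0 addr0 addrA.
have e1 : lift ord0 (ord0 : 'I_2) = 1 by apply: val_inj.
have e2 : lift ord0 (lift ord0 (ord0 : 'I_1)) = 2 by apply: val_inj.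
by rewrite e1 e2.
Qed.

Lemma dotZr (u w : V) k : dot u (k *: w) = k * dot u w.
Proof. rewrite !dot3 !mxE; ring. Qed.

Lemma dot_eq0 (u : V) : dot u u = 0 -> u = 0.
Proof.
rewrite dot3 => h.
have h0 : u 0 0 = 0 by apply/eqP; rewrite -sqrf_eq0 expr2; apply/eqP; nra.
have h1 : u 0 1 = 0 by apply/eqP; rewrite -sqrf_eq0 expr2; apply/eqP; nra.
have h2 : u 0 2 = 0 by apply/eqP; rewrite -sqrf_eq0 expr2; apply/eqP; nra.
apply/rowP => k; rewrite mxE.
case: k => [[|[|[|//]]] ?].
- by rewrite -h0; congr (u 0 _); apply: val_inj.
- by rewrite -h1; congr (u 0 _); apply: val_inj.
- by rewrite -h2; congr (u 0 _); apply: val_inj.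
Qed.

Lemma Lame_eq (f g : V -> V) j y :
  Lame f g j y = (Num.sqrt (dot (cross (pd (ordS j) f y) (pd (ordS (ordS j)) f y))
                                  (cross (pd (ordS j) f y) (pd (ordS (ordS j)) f y))))^-1
     * dot (pd j g y) (cross (pd (ordS j) f y) (pd (ordS (ordS j)) f y)).
Proof. by rewrite /Lame /Nvec /enorm dotZr. Qed.

Lemma sqrt_diff (a : V -> R) x : differentiable a x -> 0 < a x ->
  differentiable (fun y => (Num.sqrt (a y))^-1) x.
Proof.
move=> da ax.
apply: differentiableV.
  apply: differentiable_comp => //.
  apply/derivable1_diffP. by have [] := is_derive1_sqrt ax.
by rewrite /= sqrtr_eq0 -ltNge.
Qed.

Lemma coord_diff (g : V -> V) x k : differentiable g x ->
  differentiable (fun y => g y 0 k) x.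
Proof.
move=> dg; apply: (@differentiable_comp _ _ _ _ g (fun N : V => N 0 k)) => //.
exact: differentiable_coord.
Qed.

Lemma dot_diff (u w : V -> V) x :
  (forall k, differentiable (fun y => u y 0 k) x) ->
  (forall k, differentiable (fun y => w y 0 k) x) ->
  differentiable (fun y => dot (u y) (w y)) x.
Proof.
move=> du dw; under eq_fun do rewrite dot3.
by repeat apply: differentiableD; apply: differentiableM.
Qed.

Lemma cross_diff (u w : V -> V) x k :
  (forall k, differentiable (fun y => u y 0 k) x) ->
  (forall k, differentiable (fun y => w y 0 k) x) ->
  differentiable (fun y => cross (u y) (w y) 0 k) x.
Proof.
move=> du dw; under eq_fun do rewrite mxE.
by apply: differentiableB; apply: differentiableM.
Qed.

Lemma pd_diff U (g : V -> V) j x : smooth_on U g -> U x ->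
  forall k, differentiable (fun y => pd j g y 0 k) x.
Proof. by move=> sg Ux k; apply: coord_diff; exact: (sg [:: j] x Ux). Qed.

Lemma Lame_diff U (f g : V -> V) j x : smooth_on U f -> smooth_on U g -> U x ->
  0 < dot (cross (pd (ordS j) f x) (pd (ordS (ordS j)) f x))
          (cross (pd (ordS j) f x) (pd (ordS (ordS j)) f x)) ->
  differentiable (Lame f g j) x.
Proof.
move=> sf sg Ux pos.
have -> : Lame f g j = fun y => (Num.sqrt (dot (cross (pd (ordS j) f y) (pd (ordS (ordS j)) f y))
                                  (cross (pd (ordS j) f y) (pd (ordS (ordS j)) f y))))^-1
     * dot (pd j g y) (cross (pd (ordS j) f y) (pd (ordS (ordS j)) f y)).
  by apply: funext => y; rewrite Lame_eq.
apply: differentiableM.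
  apply: sqrt_diff => //; apply: dot_diff => k;
  by apply: cross_diff => k'; apply: (pd_diff _ _ _ _ sf Ux).
apply: dot_diff => k; first exact: (pd_diff _ _ _ _ sg Ux).
by apply: cross_diff => k'; apply: (pd_diff _ _ _ _ sf Ux).
Qed.

Lemma dot0r (u : V) : dot u 0 = 0.
Proof. by rewrite dot3 !mxE; ring. Qed.
Lemma dot0l (u : V) : dot 0 u = 0.
Proof. by rewrite dot3 !mxE; ring. Qed.
Lemma dot_ge0 (u : V) : 0 <= dot u u.
Proof. by rewrite dot3; nra. Qed.

Lemma cpos U (f : V -> V) x j : triply_orthogonal U f -> U x ->
  0 < dot (cross (pd (ordS j) f x) (pd (ordS (ordS j)) f x))
          (cross (pd (ordS j) f x) (pd (ordS (ordS j)) f x)) /\ Lame f f j x != 0.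
Proof.
move=> [_ [hdet _]] Ux.
have T := triple_det (fun i => pd i f x) j.
have Tn : dot (pd j f x) (cross (pd (ordS j) f x) (pd (ordS (ordS j)) f x)) != 0.
  by rewrite T; exact: hdet.
have Sn : dot (cross (pd (ordS j) f x) (pd (ordS (ordS j)) f x))
          (cross (pd (ordS j) f x) (pd (ordS (ordS j)) f x)) != 0.
  apply: contra Tn => /eqP /dot_eq0 ->; by rewrite dot0r.
split; first by rewrite lt_neqAle eq_sym Sn dot_ge0.
rewrite Lame_eq mulf_neq0 // invr_eq0 sqrtr_eq0 -ltNge lt_neqAle eq_sym Sn dot_ge0 //.
Qed.

Lemma Hbar_neq0 U (f fbar : V -> V) x j : combescure U f fbar -> U x ->
  Lame f fbar j x != 0.
Proof.
move=> [[_ [hdet _]] [hpd _]] Ux; apply/negP => /eqP h0.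
have T := triple_det (fun i => pd i fbar x) j.
move: (hdet x Ux); rewrite -T /= hpd // h0 scale0r dot0l.
by rewrite eqxx.
Qed.

Lemma is_derive_coord (g : V -> V) x v k : differentiable g x ->
  is_derive x v (fun y => g y 0 k) ('D_v g x 0 k).
Proof.
move=> dg.
rewrite derive_mx; last exact: diff_derivable.
rewrite mxE; apply: derivableP; apply: diff_derivable; exact: coord_diff.
Qed.

Lemma is_derive_sq (g : V -> R) x v d : is_derive x v g d ->
  is_derive x v (fun y => g y ^+ 2) (2 * g x * d).
Proof.
move=> h.
have -> : (fun y => g y ^+ 2) = g * g by apply: funext => y; rewrite expr2.
have K := is_deriveM h h. apply: (is_derive_eq K).
rewrite /GRing.scale /=. ring.
Qed.
Lemma alg (e0 e1 e2 a0 a1 a2 b0 b1 b2 da0 da1 da2 db0 db1 db2 g al : R) :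
 a0 != 0 -> b0 != 0 -> al != 0 -> a0*db1 = b0*da1 -> a0*db2 = b0*da2 ->
 e0*(a0*da0) + e1*(a1*da1) + e2*(a2*da2) = 0 ->
 e0*(b0*db0) + e1*(b1*db1) + e2*(b2*db2) = al^+2*(b0*g) ->
 (al^+2)^-1 * (e0*(a0*db0 + b0*da0) + e1*(a1*db1+b1*da1) + e2*(a2*db2+b2*da2)) = a0*g.
Proof.
move=> a0n b0n aln h1 h2 h6 h7.
have h1' : a0*db1 - b0*da1 = 0 by rewrite h1 subrr.
have h2' : a0*db2 - b0*da2 = 0 by rewrite h2 subrr.
have h7' : e0*(b0*db0) + e1*(b1*db1) + e2*(b2*db2) - al^+2*(b0*g) = 0 by rewrite h7 subrr.
apply: (@mulfI _ (a0*b0*al^+2)); first by rewrite !mulf_neq0 // expf_neq0.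
have -> : a0 * b0 * al ^+ 2 *
  ((al ^+ 2)^-1 * (e0 * (a0 * db0 + b0 * da0) + e1 * (a1 * db1 + b1 * da1) + e2 * (a2 * db2 + b2 * da2)))
  = a0 * b0 * (e0 * (a0 * db0 + b0 * da0) + e1 * (a1 * db1 + b1 * da1) + e2 * (a2 * db2 + b2 * da2)).
  by field; rewrite ?expf_neq0.
have -> : a0 * b0 * (e0 * (a0 * db0 + b0 * da0) + e1 * (a1 * db1 + b1 * da1) + e2 * (a2 * db2 + b2 * da2))
  = b0^+2 * (e0*(a0*da0) + e1*(a1*da1) + e2*(a2*da2))
    + a0^+2 * (e0*(b0*db0) + e1*(b1*db1) + e2*(b2*db2) - al^+2*(b0*g))
    + e1 * (b0*a1 - a0*b1) * (a0*db1 - b0*da1) + e2 * (b0*a2 - a0*b2) * (a0*db2 - b0*da2)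
    + a0^+2 * al^+2 * (b0 * g) by ring.
rewrite h6 h7' h1' h2'; ring.
Qed.


Lemma is_derive_dot (g : V -> V) x v : differentiable g x ->
  is_derive x v (fun y => dot (g y) (g y)) (2 * dot (g x) ('D_v g x)).
Proof.
move=> dg.
have c0 := is_derive_coord g x v 0 dg.
have c1 := is_derive_coord g x v 1 dg.
have c2 := is_derive_coord g x v 2 dg.
have K := is_deriveD (is_deriveD (is_deriveM c0 c0) (is_deriveM c1 c1)) (is_deriveM c2 c2).
have -> : (fun y => dot (g y) (g y)) =
  (fun y => g y 0 0 * g y 0 0) + (fun y => g y 0 1 * g y 0 1) + (fun y => g y 0 2 * g y 0 2).
  by apply: funext => y; rewrite dot3.
apply: (is_derive_eq K).
rewrite dot3 /GRing.scale /=; ring.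
Qed.

Lemma derive_near0 U (F : V -> R) x v : open U -> U x ->
  (forall y, U y -> F y = 0) -> 'D_v F x = 0.
Proof.
move=> oU Ux h.
have nU : \forall y \near x, U y by apply: open_nbhs_nbhs; split.
rewrite (@near_eq_derive _ _ _ F (cst 0) x v); first exact: derive_cst.
by apply: filterS nU => y Uy; rewrite h.
Qed.

Lemma is_derive_near0 U (F : V -> R) x v d : is_derive x v F d -> open U -> U x ->
  (forall y, U y -> F y = 0) -> d = 0.
Proof.
move=> h oU Ux z; rewrite -(@derive_val _ _ _ _ _ _ _ h); exact: derive_near0 oU Ux z.
Qed.

Lemma is_derive_conv (F G : V -> R) x v d d' : is_derive x v F d -> (forall y, G y = F y) -> d = d' ->
  is_derive x v G d'.
Proof.
move=> h e <-; have -> : G = F by apply: funext.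
exact: h.
Qed.

Lemma rot_alg (h hb dh dhb : R) : h != 0 -> hb != 0 -> hb^-1 * dhb = h^-1 * dh -> h * dhb = hb * dh.
Proof. move=> hn hbn e. have E : dhb = hb * (h^-1 * dh) by rewrite -e mulVKf.
by rewrite E; field.
Qed.

Lemma fin_alg (k : nat) (a0 a1 a2 b0 b1 b2 da0 da1 da2 db0 db1 db2 g al : R) :
  let a := [:: a0; a1; a2] in let b := [:: b0; b1; b2] in
  let da := [:: da0; da1; da2] in let db := [:: db0; db1; db2] in
  (k < 3)%N ->
  a`_k != 0 -> b`_k != 0 -> al != 0 ->
  (forall j, (j < 3)%N -> j != k -> a`_k * db`_j = b`_k * da`_j) ->
  2*a0*da0 + 2*a1*da1 - 2*a2*da2 = 0 ->
  2*b0*db0 + 2*b1*db1 - 2*b2*db2 - al^+2 * (2*(b`_k*g)) = 0 ->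
  (al^+2)^-1 * (a0 * db0 + b0 * da0 + (a1*db1 + b1*da1) - (a2 * db2 + b2 * da2)) = a`_k * g.
Proof.
move=> a b da db; case: k => [|[|[|//]]] _ /= an bn aln rot h6 h7.
- have h := alg 1 1 (-1) a0 a1 a2 b0 b1 b2 da0 da1 da2 db0 db1 db2 g al an bn aln (rot 1%N isT isT) (rot 2%N isT isT).
  rewrite -h; [congr (_ * _); ring | lra | lra].
- have h := alg 1 1 (-1) a1 a0 a2 b1 b0 b2 da1 da0 da2 db1 db0 db2 g al an bn aln (rot 0%N isT isT) (rot 2%N isT isT).
  rewrite -h; [congr (_ * _); ring | lra | lra].
- have h := alg (-1) 1 1 a2 a0 a1 b2 b0 b1 da2 da0 da1 db2 db0 db1 g al an bn aln (rot 0%N isT isT) (rot 1%N isT isT).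
  rewrite -h; [congr (_ * _); ring | lra | lra].
Qed.

Lemma is_derive_uniq (F : V -> R) x v a b : is_derive x v F a -> is_derive x v F b -> a = b.
Proof. by move=> ha hb; rewrite -(@derive_val _ _ _ _ _ _ _ ha) (@derive_val _ _ _ _ _ _ _ hb). Qed.

Lemma ord3_cases (i : 'I_3) : i = i0 \/ i = i1 \/ i = i2.
Proof.
case: i => [[|[|[|//]]] ?]; [left|right;left|right;right]; exact: val_inj.
Qed.
Lemma part1 U (f fbar : V -> V) alpha : open U -> guichard U f -> combescure U f fbar ->
  alpha != 0 -> alpha_system U f fbar alpha -> induced_potential U f fbar (phi_R f fbar alpha).
Proof.
move=> oU [tf guich] cb a0 asys x i Ux.
have sf : smooth_on U f := tf.1.
have sfb : smooth_on U fbar := cb.1.1.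
pose H := Lame f f. pose Hb := Lame f fbar.
have dH j : differentiable (H j) x := Lame_diff _ _ _ j _ sf sf Ux (cpos _ _ _ j tf Ux).1.
have dHb j : differentiable (Hb j) x := Lame_diff _ _ _ j _ sf sfb Ux (cpos _ _ _ j tf Ux).1.
have iH j : is_derive x (@evec R i) (H j) ('D_(@evec R i) (H j) x).
  by apply: derivableP; apply: diff_derivable.
have iHb j : is_derive x (@evec R i) (Hb j) ('D_(@evec R i) (Hb j) x).
  by apply: derivableP; apply: diff_derivable.
have KL := is_deriveB (is_deriveD (is_derive_sq _ _ _ _ (iH i0)) (is_derive_sq _ _ _ _ (iH i1))) (is_derive_sq _ _ _ _ (iH i2)).
have F6 := etrans (esym (@derive_val _ _ _ _ _ _ _ KL)) (derive_near0 _ _ _ (@evec R i) oU Ux (fun y Uy => guich y Uy)).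
have dfb : differentiable fbar x := sfb [::] x Ux.
have KA := is_deriveB (is_deriveB (is_deriveD (is_derive_sq _ _ _ _ (iHb i0))
   (is_derive_sq _ _ _ _ (iHb i1))) (is_derive_sq _ _ _ _ (iHb i2)))
   (is_deriveZ (alpha^+2) (is_derive_dot fbar x (@evec R i) dfb)).
have Z7 : forall y, U y -> (fun y => lorentz_sq Hb y - alpha^+2 * dot (fbar y) (fbar y)) y = 0.
  by move=> y Uy /=; rewrite (asys y Uy) subrr.
have F7 := is_derive_near0 _ _ _ _ _ KA oU Ux.
have F7' : forall y, U y -> ((((fun y => Hb i0 y ^+ 2) + (fun y => Hb i1 y ^+ 2) - (fun y => Hb i2 y ^+ 2)) - 
   alpha ^+ 2 \*: (fun y => dot (fbar y) (fbar y))) y = 0).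
  move=> y Uy. change (lorentz_sq Hb y - alpha ^+ 2 * dot (fbar y) (fbar y) = 0). exact: Z7.
move: {F7 F7'}(F7 F7') => F7.
have rot j : i != j -> H i x * 'D_(@evec R i) (Hb j) x = Hb i x * 'D_(@evec R i) (H j) x.
  move=> ij; have e := cb.2.2 x i j Ux ij. 
  have hbn : Hb i x != 0 by apply: (Hbar_neq0 _ _ _ _ _ cb Ux).
  have hn : H i x != 0 by apply: (cpos _ _ _ i tf Ux).2.
  change ((Hb i x)^-1 * 'D_(@evec R i) (Hb j) x = (H i x)^-1 * 'D_(@evec R i) (H j) x) in e.
  exact: rot_alg hn hbn e.
have gm : dot (fbar x) ('D_(@evec R i) fbar x) = Hb i x * gam f fbar i x.
  have E := cb.2.1 x i Ux.
  change (dot (fbar x) (pd i fbar x) = Hb i x * gam f fbar i x).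
  rewrite E /gam; exact: dotZr.
rewrite gm in F7.
have KP := is_deriveZ ((alpha^+2)^-1) (is_deriveB (is_deriveD (is_deriveM (iH i0) (iHb i0)) (is_deriveM (iH i1) (iHb i1))) (is_deriveM (iH i2) (iHb i2))).
refine (is_derive_conv _ _ _ _ _ _ KP _ _); first by move=> y.
have hn := (cpos _ _ _ i tf Ux).2.
have hbn := Hbar_neq0 _ _ _ _ i cb Ux.
move: F7; rewrite /GRing.scale /= => F7.
rewrite /GRing.scale /=.
rewrite -/H -/Hb in hn hbn *.
clearbody H Hb.
have [e|[e|e]] := ord3_cases i; subst i.
- apply: (fin_alg 0 _ _ _ _ _ _ _ _ _ _ _ _ _ _ _ hn hbn a0 _ F6 F7) => //.
  by case=> [|[|[|//]]] //= _ _; apply: rot.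
- apply: (fin_alg 1 _ _ _ _ _ _ _ _ _ _ _ _ _ _ _ hn hbn a0 _ F6 F7) => //.
  by case=> [|[|[|//]]] //= _ _; apply: rot.
- apply: (fin_alg 2 _ _ _ _ _ _ _ _ _ _ _ _ _ _ _ hn hbn a0 _ F6 F7) => //.
  by case=> [|[|[|//]]] //= _ _; apply: rot.
Qed.
Lemma ballE (y w : V) r : ball y r w <-> 0 < r /\ forall j, `|y 0 j - w 0 j| < r.
Proof.
split.
  move=> [r0 h]; split => // j. exact: (h 0 j).
move=> [r0 h]; split => // i j. rewrite ord1. exact: h.
Qed.

Lemma line_const (g : V -> R) (p e : V) (a b : R) : a <= b ->
  (forall t, a <= t <= b -> is_derive (t *: e + p) e g 0) -> g (b *: e + p) = g (a *: e + p).
Proof.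
move=> ab hd.
pose h := fun t : R => g (t *: e + p).
have hder : forall t, a <= t <= b -> is_derive t 1 h 0.
  move=> t tab; have [d1 d2] := hd t tab.
  have E : (fun s : R => s^-1 *: ((h \o shift t) (s *: 1) - h t)) =
           (fun s : R => s^-1 *: ((g \o shift (t *: e + p)) (s *: e) - g (t *: e + p))).
    apply: funext => s; rewrite /h /=.
    have -> : s *: (1:R) = s by rewrite /GRing.scale /= mulr1.
    by rewrite scalerDl addrA.
  split; [rewrite /derivable E; exact: d1 | rewrite /derive E; exact: d2].
have [c _ MV] : exists2 c, c \in `[a, b]%R & h b - h a = (fun _ => 0) c * (b - a).
  apply: MVT_segment => //.
    move=> t; rewrite in_itv /= => /andP[t1 t2]; apply: hder; apply/andP; split; exact: ltW.
  have D : {in `[a, b]%R, forall x, derivable h x 1}.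
    move=> t; rewrite in_itv /= => tab.
    by have [] := hder t tab.
  exact: (derivable_within_continuous D).
by move: MV; rewrite mul0r => /eqP; rewrite subr_eq0 => /eqP.
Qed.
Lemma evecE (k j : 'I_3) : @evec R k 0 j = (j == k)%:R.
Proof. by rewrite /evec mxE eqxx. Qed.

Lemma seg_step (P : set V) (D : V -> R) (q e : V) (s : R) :
  (forall t, `|t| <= `|s| -> P (t *: e + q)) -> (forall z, P z -> is_derive z e D 0) ->
  D (s *: e + q) = D q.
Proof.
move=> hP hd.
have D0 : D q = D (0 *: e + q) by rewrite scale0r add0r.
have [s0|s0] := leP 0 s.
- rewrite D0; apply: line_const => // t /andP[t0 ts]; apply: hd; apply: hP.
  by rewrite (ger0_norm t0) (ger0_norm s0).
- rewrite D0; symmetry; apply: line_const; first exact: ltW.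
  move=> t /andP[st t0]; apply: hd; apply: hP.
  rewrite (ler0_norm t0) (ltr0_norm s0); lra.
Qed.

Lemma loc_const (U : set V) (D : V -> R) y : open U -> U y ->
  (forall z i, U z -> is_derive z (@evec R i) D 0) -> \forall z \near y, D z = D y.
Proof.
move=> oU Uy hd.
have : nbhs y U by apply: open_nbhs_nbhs.
rewrite nbhs_ballP => -[r r0 hr].
apply/nbhs_ballP; exists r => // z yz.
have [_ yzb] := (ballE y z r).1 yz.
have inU : forall w : V, (forall j, `|w 0 j - y 0 j| <= `|z 0 j - y 0 j|) -> U w.
  move=> w hw; apply: hr; apply/ballE; split => // j.
  rewrite distrC; apply: le_lt_trans (hw j) _; rewrite distrC; exact: yzb.
pose d j := z 0 j - y 0 j.
pose q1 := d i0 *: @evec R i0 + y.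
pose q2 := d i1 *: @evec R i1 + q1.
have zq : z = d i2 *: @evec R i2 + q2.
  apply/rowP => j; rewrite /q2 /q1 /d !mxE ?evecE.
  have [->|[->|->]] := ord3_cases j; rewrite /= ?mulr1n ?mulr0n ?mulr1 ?mulr0 ?addr0 ?add0r; ring.
have hd' : forall k, forall w, U w -> is_derive w (@evec R k) D 0 by move=> k w Uw; exact: hd.
rewrite zq (seg_step U D q2 (@evec R i2) (d i2)) ?(hd' i2) //; last first.
  move=> t ht; apply: inU => j; rewrite /q2 /q1 /d !mxE ?evecE.
  by have [->|[->|->]] := ord3_cases j; rewrite /= ?mulr1n ?mulr0n ?mulr1 ?mulr0 ?addr0 ?add0r
    !addrK //; exact: lexx.
rewrite /q2 (seg_step U D q1 (@evec R i1) (d i1)) ?(hd' i1) //; last first.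
  move=> t ht; apply: inU => j; rewrite /q2 /q1 /d !mxE ?evecE.
  by have [->|[->|->]] := ord3_cases j; rewrite /= ?mulr1n ?mulr0n ?mulr1 ?mulr0 ?addr0 ?add0r
    ?addrK ?subrr ?normr0 ?normr_ge0 //; exact: lexx.
rewrite /q1 (seg_step U D y (@evec R i0) (d i0)) ?(hd' i0) //.
  move=> t ht; apply: inU => j; rewrite /d !mxE ?evecE.
  by have [->|[->|->]] := ord3_cases j; rewrite /= ?mulr1n ?mulr0n ?mulr1 ?mulr0 ?addr0 ?add0r
    ?addrK ?subrr ?normr0 ?normr_ge0 //; exact: lexx.
Qed.
Lemma conn_const (U : set V) (D : V -> R) : open U -> connected U ->
  (forall z i, U z -> is_derive z (@evec R i) D 0) -> forall y z, U y -> U z -> D z = D y.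
Proof.
move=> oU cU hd y z Uy Uz.
have opB : forall w, U w -> nbhs w [set w' | U w' /\ D w' = D w].
  move=> w Uw.
  have nU : nbhs w U by apply: open_nbhs_nbhs.
  by apply: filterS2 nU (loc_const _ _ _ oU Uw hd) => w' h1 h2.
pose B := [set w | U w /\ D w = D y].
pose C := [set w | U w /\ D w != D y].
have oB : open B.
  rewrite openE => w [Uw Dw]; rewrite /interior.
  by apply: filterS (opB w Uw) => w' [Uw' Dw']; split => //; rewrite Dw' Dw.
have oC : open C.
  rewrite openE => w [Uw Dw]; rewrite /interior.
  by apply: filterS (opB w Uw) => w' [Uw' Dw']; split => //; rewrite Dw'.
have BU : B = U.
  apply: cU.
  - by exists y.
  - exists B => //; apply/seteqP; split => w; first by move=> [Uw Dw].
    by move=> [_ h].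
  - exists (~` C); first exact: open_closedC.
    apply/seteqP; split => w.
      by move=> [Uw Dw]; split => // -[_]; rewrite Dw eqxx.
    move=> [Uw nC]; split => //; apply/eqP; apply: contra_notT nC => h.
    by split.
have : B z by rewrite BU.
by move=> [].
Qed.
Lemma rib_alg (h0 h1 h2 b0 b1 b2 p n al : R) : n != 0 -> al != 0 ->
  h0^+2 + h1^+2 - h2^+2 = 0 -> b0^+2 + b1^+2 - b2^+2 = al^+2 * n ->
  (h0 - 2 * p / n * b0)^+2 + (h1 - 2 * p / n * b1)^+2 - (h2 - 2 * p / n * b2)^+2
  = 4 * al^+2 * p * (p - (al^+2)^-1 * (h0 * b0 + h1 * b1 - h2 * b2)) / n.
Proof.
move=> nn aln hh hb.
have -> : (h0 - 2 * p / n * b0)^+2 + (h1 - 2 * p / n * b1)^+2 - (h2 - 2 * p / n * b2)^+2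
  = (h0^+2 + h1^+2 - h2^+2) - 2 * (2 * p / n) * (h0 * b0 + h1 * b1 - h2 * b2)
    + (2 * p / n)^+2 * (b0^+2 + b1^+2 - b2^+2) by ring.
rewrite hh hb; field.
by rewrite nn aln.
Qed.

Lemma orth0 (a : 'I_3 -> V) (u : V) : \det (\matrix_(i < 3, k < 3) a i 0 k) != 0 ->
  (forall i, dot (a i) u = 0) -> u = 0.
Proof.
move=> dn h.
set M := \matrix_(i < 3, k < 3) a i 0 k.
have Mu : M *m u^T = 0.
  apply/matrixP => i j; rewrite !mxE -[RHS](h i) /dot.
  by apply: eq_bigr => k _; rewrite !mxE (ord1 j).
have un : M \in unitmx by rewrite unitmxE unitfE.
have : u^T = 0 by rewrite -(mulKmx un (u^T)) Mu mulmx0.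
by move/(congr1 trmx); rewrite trmxK trmx0.
Qed.
Lemma prod_zero (a p q n : R) : a != 0 -> n != 0 -> 4 * a^+2 * p * (p - q) / n = 0 ->
  p = 0 \/ p = q.
Proof.
move=> an nn /eqP; rewrite mulf_eq0 invr_eq0 (negbTE nn) orbF !mulf_eq0 subr_eq0.
rewrite (negbTE an) pnatr_eq0 /=.
by case/orP => /eqP; [left|right].
Qed.

Lemma aux_alg (p q p' q' : R) : p' - q' = p - q -> p != q -> (p' = 0 \/ p' = q') -> p' = 0.
Proof.
move=> E ne [//|e]; move: E; rewrite e subrr => /esym /eqP.
by rewrite subr_eq0 (negbTE ne).
Qed.

Lemma mul_l0 (a b : R) : a * b = 0 -> a != 0 -> b = 0.
Proof. by move=> /eqP; rewrite mulf_eq0 => /orP[/eqP->|/eqP->]; rewrite ?eqxx. Qed.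

Lemma dotC (u w : V) : dot u w = dot w u.
Proof. rewrite !dot3; ring. Qed.
End S.

Arguments part1 {R U f fbar alpha}.
Arguments conn_const {R U D}.
Arguments prod_zero {R a p q n}.
Arguments is_derive_near0 {R U F x v d}.
Arguments cpos {R U f x} j.
Arguments orth0 {R} a {u}.
Arguments mul_l0 {R a b}.
Arguments aux_alg {R p q p' q'}.
Arguments rib_alg {R h0 h1 h2 b0 b1 b2 p n al}.

Theorem theorem5p3 (R : realType) (U : set 'rV[R]_3) (f fbar : 'rV[R]_3 -> 'rV[R]_3)
  (alpha : R) :
  open U -> connected U ->
  guichard U f ->
  combescure U f fbar ->
  (forall x, U x -> fbar x != 0) ->
  alpha != 0 ->
  alpha_system U f fbar alpha ->
  induced_potential U f fbar (phi_R f fbar alpha) /\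
  (forall phi : 'rV[R]_3 -> R, induced_potential U f fbar phi ->
     (ribaucour_guichard U f fbar phi <-> forall x, U x -> phi x = phi_R f fbar alpha x)).
Proof.
move=> oU cU gu cb fb0 a0 asys.
have P1 := part1 oU gu cb a0 asys.
split => // phi hphi.
have [tf guich] := gu.
have nn : forall x, U x -> dot (fbar x) (fbar x) != 0.
  by move=> x Ux; apply: contra (fb0 x Ux) => /eqP /dot_eq0 ->.
have key : forall x, U x -> lorentz_sq (ribaucour_Lame f fbar phi) x =
   4 * alpha^+2 * phi x * (phi x - phi_R f fbar alpha x) / dot (fbar x) (fbar x).
  move=> x Ux.
  exact: (rib_alg (nn x Ux) a0 (guich x Ux) (asys x Ux)).
split.
- move=> rg x Ux.
  have D0 : forall z i, U z -> is_derive z (@evec R i) (phi - phi_R f fbar alpha) 0.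
    move=> z i Uz; have K := is_deriveB (hphi z i Uz) (P1 z i Uz).
    by apply: (is_derive_eq K); rewrite subrr.
  have cst := conn_const oU cU D0.
  have dis : forall y, U y -> phi y = 0 \/ phi y = phi_R f fbar alpha y.
    by move=> y Uy; apply: (prod_zero a0 (nn y Uy)); rewrite -key // rg.
  case: (eqVneq (phi x) (phi_R f fbar alpha x)) => // ne.
  exfalso.
  have allz : forall y, U y -> phi y = 0.
    move=> y Uy.
    have E : phi y - phi_R f fbar alpha y = phi x - phi_R f fbar alpha x := cst x y Ux Uy.
    exact: aux_alg E ne (dis y Uy).
  have gz : forall i, gam f fbar i x = 0.
    move=> i; exact: mul_l0 (is_derive_near0 (hphi x i Ux) oU Ux allz) (cpos i tf Ux).2.
  apply: (negP (fb0 x Ux)); apply/eqP.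
  apply: (orth0 (fun i => pd i fbar x) (cb.1.2.1 x Ux)) => i.
  change (dot (pd i fbar x) (fbar x) = 0).
  rewrite (cb.2.1 x i Ux) dotC dotZr.
  have := gz i; rewrite /gam => ->; exact: mulr0.
- by move=> heq x Ux; rewrite key // heq // subrr mulr0 mul0r.
Qed.
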